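(* Let $n,k,b,t$ be positive integers with $k\le n$, let $V=\{1,\dots,n\}$, and let $Q_1,\dots,Q_t$ be arbitrary subsets of $V\times\{1,\dots,b\}$. For $1\le i\le t$ and $1\le\beta\le b$ put $Q_{i,\beta}=\{x\in V:(x,\beta)\in Q_i\}$. Let $\mathcal F_k^n$ denote the family of all $k$-element subsets of $V$. Then there exists a subfamily $\mathcal S\subseteq\mathcal F_k^n$ with $|\mathcal S|\ge |\mathcal F_k^n|/2^{bt}$ such that for any two sets $A,B\in\mathcal S$ and all $1\le i\le t$, $1\le\beta\le b$, the number $|A\cap Q_{i,\beta}|$ is odd if and only if $|B\cap Q_{i,\beta}|$ is odd.
   Context: Each $Q_i$ (a ''query'') is interpreted as the set of pairs (station $x$, channel $\beta$) such that station $x$ transmits on channel $\beta$ at time step $i$; a deterministic oblivious algorithm is represented by such a sequence $Q_1,\dots,Q_t$. *)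

(* Defs.v *)
From mathcomp Require Import all_boot.
Set Implicit Arguments. Unset Strict Implicit. Unset Printing Implicit Defensive.

Definition Qslice (n b : nat) (Qi : {set 'I_n * 'I_b}) (beta : 'I_b) : {set 'I_n} :=
  [set x | (x, beta) \in Qi].

Definition Fkn (n k : nat) : {set {set 'I_n}} := [set A : {set 'I_n} | #|A| == k].

(* Main.v *)
Require Import Defs.
From mathcomp Require Import all_boot.

Theorem lemma1 (n k b t : nat) (hn : 0 < n) (hk0 : 0 < k) (hb : 0 < b) (ht : 0 < t)
  (hkn : k <= n) (Q : 'I_t -> {set 'I_n * 'I_b}) :
  exists S : {set {set 'I_n}},
    [/\ S \subset Fkn n k,
        #|Fkn n k| <= #|S| * 2 ^ (b * t)
      & forall A B, A \in S -> B \in S ->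
          forall (i : 'I_t) (beta : 'I_b),
            odd #|A :&: Qslice (Q i) beta| = odd #|B :&: Qslice (Q i) beta| ].
Proof.
pose T := {ffun 'I_t * 'I_b -> bool}.
pose sg (A : {set 'I_n}) : T := [ffun p => odd #|A :&: Qslice (Q p.1) p.2|].
pose C (s : T) := [set A in Fkn n k | sg A == s].
pose s0 : T := [ffun => false].
case: (@arg_maxnP T s0 xpredT (fun s => #|C s|) isT) => sm _ Hmax.
exists (C sm); split.
- by apply/subsetP => A; rewrite inE => /andP[].
- have -> : #|Fkn n k| = \sum_(s : T) #|C s|.
    rewrite -sum1_card (partition_big sg xpredT) //=.
    apply: congr_big => // s _; rewrite /C -sum1_card; apply: eq_bigl => A; by rewrite inE.
  have -> : 2 ^ (b * t) = #|T| by rewrite card_ffun card_prod !card_ord card_bool mulnC.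
  rewrite mulnC -sum_nat_const; apply: leq_sum => s _; exact: Hmax.
- move=> A B; rewrite !inE => /andP[_ /eqP HA] /andP[_ /eqP HB] i beta.
  have := congr1 (fun f : T => f (i, beta)) (etrans HA (esym HB)).
  by rewrite /= !ffunE.
Qed.
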